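(* Let $\theta>1$, $r\in(\theta^{-1},\theta^{-1/2}]$ and $s=\max\big(1,\frac{\ln\theta}{\ln(r\theta)}-2\big)$. There is a constant $C'>0$ depending only on $(s,\theta)$ such that the following holds. Let $p^*\in[1,\theta]$, suppose the random price sequence has maximum $P^*=p^*$ almost surely, and let $Y\sim\mathrm{Unif}([p^*(1-\epsilon'),p^*(1+\epsilon')])$ with $0<\epsilon'\le\min\{1-1/p^*,\ \theta/p^*-1\}$. Then \[ \frac{\mathbb{E}[\mathsf{A}^1_r(P,Y)]}{\mathbb{E}[P^*]}\ \ge\ \frac{1}{r\theta}\Big(1-\frac{s}{2}\epsilon'-C'\epsilon'^2\Big). \]
   Context: One-max search: fix $\theta>1$. Prices $p_1,\dots,p_n\in[1,\theta]$ are revealed one at a time; the algorithm receives at the start a prediction $y\in[1,\theta]$ of the maximum price. At each step it irrevocably accepts the current price (payoff = that price) or rejects it; if nothing is accepted the payoff is $1$. Let $\varphi_r(z)=\frac{r\theta-1}{1-r}+\frac{1-r^2\theta}{1-r}\cdot\frac{z}{r\theta}$ and $\Phi^1_r(z)=\max(r\theta,\varphi_r(z))$; $\mathsf{A}^1_r$ accepts the first price $p_i\ge\Phi^1_r(y)$, and $\mathsf{A}^1_r(P,Y)$ is its payoff on the realized prices and prediction. *)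

(* Defs.v *)
From HB Require Import structures.
From mathcomp Require Import all_boot all_order all_algebra.
From mathcomp Require Import all_classical all_reals all_analysis.
Set Implicit Arguments. Unset Strict Implicit. Unset Printing Implicit Defensive.
Import Order.TTheory GRing.Theory Num.Theory.
Local Open Scope ring_scope.

Section OneMax.
Variable R : realType.

Definition phi_r (theta r z : R) : R :=
  (r * theta - 1) / (1 - r) + (1 - r ^+ 2 * theta) / (1 - r) * (z / (r * theta)).

Definition Phi1 (theta r z : R) : R := Num.max (r * theta) (phi_r theta r z).

Fixpoint accept_first (t : R) (ps : seq R) : R :=
  match ps with
  | [::] => 1
  | p :: ps' => if t <= p then p else accept_first t ps'
  end.

Definition A1 (theta r : R) (ps : seq R) (y : R) : R :=
  accept_first (Phi1 theta r y) ps.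

(* Maximum price of the sequence (n >= 1 prices, all >= 1). *)
Definition maxprice (n : nat) (ps : 'I_n -> R) : R :=
  \big[Num.max/1]_(i < n) ps i.

Definition s_param (theta r : R) : R :=
  Num.max 1 (ln theta / ln (r * theta) - 2).

End OneMax.

(* Main.v *)
Require Import Defs.
From HB Require Import structures.
From mathcomp Require Import all_boot all_order all_algebra.
From mathcomp Require Import all_classical all_reals all_analysis.
From mathcomp Require Import measurable_realfun lebesgue_integral uniform_distribution.
From mathcomp Require Import ring lra.
Import Order.TTheory GRing.Theory Num.Theory.
Local Open Scope classical_set_scope.
Local Open Scope ring_scope.

Section Helpers.
Variable R : realType.

Lemma accept_ge1 (t : R) (ps : seq R) :
  (forall v, v \in ps -> 1 <= v) -> 1 <= accept_first t ps.
Proof.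
elim: ps => [|p ps IH] H /=; first by [].
case: ifP => _; first by apply: H; rewrite inE eqxx.
by apply: IH => v vin; apply: H; rewrite inE vin orbT.
Qed.

Lemma accept_ge (t : R) (ps : seq R) v :
  v \in ps -> t <= v -> t <= accept_first t ps.
Proof.
elim: ps => [|p ps IH] //= vin tv.
case: ifP => // tp.
move: vin; rewrite inE => /orP[/eqP vp|vin]; last exact: IH.
by move: tp; rewrite -vp tv.
Qed.

Lemma bigmax_ex n (F : 'I_n -> R) t : 1 < t ->
  t <= \big[Num.max/1]_(i < n) F i -> exists i, t <= F i.
Proof.
move=> t1 tle; apply/not_existsP => H.
have : \big[Num.max/1]_(i < n) F i < t.
  apply: (big_ind (fun v => v < t)) => //.
    by move=> x y xt yt; rewrite gt_max xt yt.
  by move=> i _; rewrite ltNge; apply/negP => /(H i).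
by rewrite ltNge tle.
Qed.

Lemma meas_bigmax d (T : measurableType d) (I : Type) (s : seq I)
  (F : I -> T -> R) : (forall i, measurable_fun setT (F i)) ->
  measurable_fun setT (fun w => \big[Num.max/1]_(i <- s) F i w).
Proof.
move=> mF; elim: s => [|i s IH].
  have -> : (fun w => \big[Num.max/1]_(i <- [::]) F i w) = (fun _ => 1).
    by apply/funext => w; rewrite big_nil.
  exact: measurable_cst.
have -> : (fun w => \big[Num.max/1]_(j <- i :: s) F j w) =
  (F i) \max (fun w => \big[Num.max/1]_(j <- s) F j w).
  by apply/funext => w; rewrite big_cons.
exact: measurable_maxr.
Qed.

Lemma meas_accept d (T : measurableType d) (I : Type) (l : seq I)
  (t : T -> R) (F : I -> T -> R) : measurable_fun setT t ->
  (forall i, measurable_fun setT (F i)) ->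
  measurable_fun setT (fun w => accept_first (t w) [seq F i w | i <- l]).
Proof.
move=> mt mF; elim: l => [|i l IH] /=; first exact: measurable_cst.
apply: measurable_fun_ifT => //.
exact: measurable_fun_ler.
Qed.


Local Open Scope ereal_scope.

Lemma exp_step d (T : measurableType d) (Pr : probability T R) (f : T -> R)
  (A B : set T) (c1 c2 a b : R) : measurable A -> measurable B ->
  (0 <= c1)%R -> (0 <= c2)%R -> Pr A = a%:E -> Pr B = b%:E ->
  measurable_fun setT f -> (forall w, (0 <= f w)%R) ->
  {ae Pr, forall w, (1 + c1 * \1_A w + c2 * \1_B w <= f w)%R} ->
  (1 + c1 * a + c2 * b)%:E <= \int[Pr]_w (f w)%:E.
Proof.
move=> mA mB c10 c20 PA0 PB0 mf f0 ae.
have PA : (Pr : {measure set T -> \bar R}) A = a%:E := PA0.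
have PB : (Pr : {measure set T -> \bar R}) B = b%:E := PB0.
have mgA : measurable_fun setT (fun w => (c1 * \1_A w)%:E).
  by apply/measurable_EFinP; apply: measurable_funM => //; exact: measurable_indic.
have mgB : measurable_fun setT (fun w => (c2 * \1_B w)%:E).
  by apply/measurable_EFinP; apply: measurable_funM => //; exact: measurable_indic.
have gA0 w : 0 <= (c1 * \1_A w)%:E by rewrite lee_fin mulr_ge0.
have gB0 w : 0 <= (c2 * \1_B w)%:E by rewrite lee_fin mulr_ge0.
have m1 : measurable_fun setT (fun w : T => (1%:E : \bar R)) by exact: measurable_cst.
have m1A : measurable_fun setT (fun w => 1%:E + (c1 * \1_A w)%:E).
  by apply: emeasurable_funD.
have mi : forall D : set T, measurable D -> measurable_fun setT (fun w => (\1_D w)%:E : \bar R).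
  by move=> D mD; apply/measurable_EFinP; exact: measurable_indic.
have -> : (1 + c1 * a + c2 * b)%:E =
   \int[Pr]_w ((1%:E + (c1 * \1_A w)%:E) + (c2 * \1_B w)%:E).
  rewrite ge0_integralD //; last by move=> w _; rewrite adde_ge0.
  rewrite ge0_integralD //.
  have P1 : (Pr : {measure set T -> \bar R}) [set: T] = 1 := probability_setT Pr.
  rewrite integral_cst // P1 mul1e.
  have IA : \int[Pr]_w (c1 * \1_A w)%:E = (c1 * a)%:E.
    rewrite (eq_integral (fun w => c1%:E * (\1_A w)%:E)); last by move=> w _; rewrite EFinM.
    rewrite ge0_integralZl_EFin //; try by [move=> w _; rewrite lee_fin]; try exact: mi.
    by rewrite integral_indic // setIT PA -EFinM.
  have IB : \int[Pr]_w (c2 * \1_B w)%:E = (c2 * b)%:E.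
    rewrite (eq_integral (fun w => c2%:E * (\1_B w)%:E)); last by move=> w _; rewrite EFinM.
    rewrite ge0_integralZl_EFin //; try by [move=> w _; rewrite lee_fin]; try exact: mi.
    by rewrite integral_indic // setIT PB -EFinM.
  by rewrite IA IB -!EFinD.
apply: ae_ge0_le_integral => //.
- by move=> w _; rewrite !adde_ge0.
- by apply: emeasurable_funD => //; apply: emeasurable_funD => //; exact: measurable_cst.
- by move=> w _; rewrite lee_fin.
- exact/measurable_EFinP.
- apply: filterS ae => w H _; by rewrite -!EFinD lee_fin.
Qed.

Lemma unif_cc (L U c e : R) : (L < U)%R -> (L <= c)%R -> (c <= e)%R -> (e <= U)%R ->
  \int[@lebesgue_measure R]_(x in `[c, e]) (uniform_pdf L U x)%:E = ((e - c) / (U - L))%:E.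
Proof.
move=> LU Lc ce eU.
rewrite integral_uniform_pdf setIidl; last first.
  by apply: subset_itv; rewrite bnd_simp.
rewrite (eq_integral (fun=> (U - L)^-1%:E)); last first.
  move=> x; rewrite inE/= in_itv/= => /andP[cx xe].
  by rewrite /uniform_pdf (le_trans Lc cx) (le_trans xe eU).
rewrite integral_cst//= lebesgue_measure_itv/= lte_fin.
case: ltP => ce'.
  by rewrite -EFinD -EFinM mulrC.
have -> : e = c by apply/eqP; rewrite eq_le ce ce'.
by rewrite subrr mul0r mule0.
Qed.

Lemma unif_oc (L U c e : R) : (L < U)%R -> (L <= c)%R -> (c <= e)%R -> (e <= U)%R ->
  \int[@lebesgue_measure R]_(x in `]c, e]) (uniform_pdf L U x)%:E = ((e - c) / (U - L))%:E.
Proof.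
move=> LU Lc ce eU.
rewrite integral_uniform_pdf setIidl; last first.
  by apply: subset_itv; rewrite bnd_simp.
rewrite (eq_integral (fun=> (U - L)^-1%:E)); last first.
  move=> x; rewrite inE/= in_itv/= => /andP[cx xe].
  by rewrite /uniform_pdf (le_trans Lc (ltW cx)) (le_trans xe eU).
rewrite integral_cst//= lebesgue_measure_itv/= lte_fin.
case: ltP => ce'.
  by rewrite -EFinD -EFinM mulrC.
have -> : e = c by apply/eqP; rewrite eq_le ce ce'.
by rewrite subrr mul0r mule0.
Qed.

Local Close Scope ereal_scope.

Lemma alg_facts (th r : R) : 1 < th -> th^-1 < r -> r ^+ 2 * th <= 1 ->
  let x := r * th in let a0 := (x - 1) / (1 - r) in
  let b0 := (1 - r ^+ 2 * th) / ((1 - r) * x) in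
  [/\ 0 < r, r < 1, 1 < x, 0 < a0 & 
   [/\ 0 <= b0, b0 <= x^-1, a0 = (1 - b0) * x, a0 / th + b0 = x^-1 &
       (forall z, (x - 1) / (1 - r) + (1 - r ^+ 2 * th) / (1 - r) * (z / x) = a0 + b0 * z)]].
Proof.
move=> th1 rlo rhi x a0 b0.
have th0 : 0 < th by lra.
have r0 : 0 < r by apply: lt_trans rlo; rewrite invr_gt0.
have x1 : 1 < x.
  have : th^-1 * th < r * th by rewrite ltr_pM2r.
  by rewrite mulVf ?gt_eqF.
have r1 : r < 1.
  have : r ^+ 2 < 1 by apply: lt_le_trans rhi; rewrite -[X in X < _]mulr1 ltr_pM2l ?exprn_gt0.
  by apply: contraLR; rewrite -!leNgt => r1; rewrite expr_ge1 // (le_trans _ r1).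
have x0 : 0 < x by lra.
have r10 : 0 < 1 - r by lra.
have xne : x != 0 by rewrite gt_eqF.
have rne : 1 - r != 0 by rewrite gt_eqF.
have rx : r ^+ 2 * th = r * x by rewrite /x expr2 mulrA.
split => //.
  by rewrite /a0 divr_gt0 // subr_gt0.
split.
- by rewrite /b0 divr_ge0 // ?subr_ge0 // mulr_ge0 // ltW.
- rewrite /b0 ler_pdivrMr ?mulr_gt0 //.
  have -> : x^-1 * ((1 - r) * x) = 1 - r by field.
  rewrite rx.
  suff : r <= r * x by lra.
  by rewrite ler_peMr // ltW.
- rewrite /a0 /b0 rx; field; rewrite rne xne //.
- rewrite /a0 /b0 rx /x; field.
  by rewrite rne (gt_eqF th0) (gt_eqF r0).
- by move=> z; rewrite /a0 /b0; field; rewrite rne xne.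
Qed.

Lemma s_bound (th r : R) : 1 < th -> 1 < r * th ->
  1 <= s_param th r /\ expR (ln th / (s_param th r + 2)) <= r * th /\
  1 < expR (ln th / (s_param th r + 2)).
Proof.
move=> th1 x1.
have lx : 0 < ln (r * th) := ln_gt0 x1.
have lt : 0 < ln th := ln_gt0 th1.
have s1 : 1 <= s_param th r by rewrite /s_param le_max lexx.
have s2 : ln th / ln (r * th) - 2 <= s_param th r by rewrite /s_param le_max lexx orbT.
have sp : 0 < s_param th r + 2 by lra.
split => //; split; last by rewrite expR_gt1 divr_gt0.
have h1 : ln th / ln (r * th) <= s_param th r + 2 by lra.
rewrite ler_pdivrMr // in h1.
have h2 : ln th / (s_param th r + 2) <= ln (r * th).
  by rewrite ler_pdivrMr // mulrC.
rewrite -[X in _ <= X]lnK; last by rewrite posrE; lra.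
by rewrite ler_expR.
Qed.

Lemma accept_le (t h : R) (ps : seq R) :
  (forall v, v \in ps -> v <= h) -> 1 <= h -> accept_first t ps <= h.
Proof.
elim: ps => [|p ps IH] H h1 //=.
case: ifP => _; first by apply: H; rewrite inE eqxx.
by apply: IH => // v vin; apply: H; rewrite inE vin orbT.
Qed.

Lemma payoff_ge (th r : R) n (ps : 'I_n -> R) y p : 1 < r * th ->
  maxprice ps = p -> Phi1 th r y <= p ->
  Phi1 th r y <= A1 th r [seq ps i | i <- enum 'I_n] y.
Proof.
move=> x1 mp Pp.
have P1 : 1 < Phi1 th r y by rewrite /Phi1 lt_max x1.
have Pm : Phi1 th r y <= \big[Num.max/1]_(i < n) ps i by move: mp; rewrite /maxprice => ->.
have [i Hi] := @bigmax_ex n ps _ P1 Pm.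
rewrite /A1; apply: (@accept_ge _ _ (ps i)) => //.
by apply: map_f; rewrite mem_enum.
Qed.

Lemma fine_ge (c h : R) (X : \bar R) : (c%:E <= X)%E -> (X <= h%:E)%E -> c <= fine X.
Proof. by case: X => [x| |] //=; rewrite lee_fin. Qed.

Lemma nf_ineq (x s e p a0 b0 th C : R) : 1 < x -> 1 <= s -> 0 < e -> 0 <= C ->
  0 < p -> p <= th -> 0 <= b0 -> b0 <= x^-1 -> a0 / th + b0 = x^-1 -> 0 < th ->
  x^-1 * (1 - s / 2 * e - C * e ^+ 2) * p <= a0 + b0 * p - b0 * p * e / 2.
Proof.
move=> x1 s1 e0 C0 p0 pth b0p b0x abE th0.
have ix0 : 0 < x^-1 by rewrite invr_gt0; lra.
set ix := x^-1 in ix0 b0x abE *.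
have a0E : a0 = th * (ix - b0).
  have -> : a0 = (a0 / th) * th by rewrite mulfVK ?gt_eqF.
  rewrite mulrC; congr (_ * _); lra.
rewrite a0E.
have h1 : 0 <= (ix - b0) * (th - p) by rewrite mulr_ge0 // subr_ge0.
have h2 : 0 <= (ix * s - b0) * (e * p).
  rewrite mulr_ge0 // ?mulr_ge0 ?subr_ge0 //; try lra.
  by apply: le_trans b0x _; rewrite ler_peMr // ltW.
have h3 : 0 <= C * e ^+ 2 * (ix * p) by rewrite !mulr_ge0 // ?sqr_ge0 ltW.
have -> : ix * (1 - s / 2 * e - C * e ^+ 2) * p =
   ix * p - (ix * s) * (e * p) / 2 - C * e ^+ 2 * (ix * p) by ring.
have -> : th * (ix - b0) + b0 * p - b0 * p * e / 2 =
   (ix - b0) * (th - p) + ix * p - b0 * (e * p) / 2 by ring.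
have -> : (ix * s) * (e * p) = (ix * s - b0) * (e * p) + b0 * (e * p) by ring.
lra.
Qed.

Lemma fail_ineq (x b0 p e m th : R) : 1 < x -> 0 <= b0 -> x * b0 <= 1 -> 0 < e ->
  0 < m -> m <= x - 1 -> x <= th -> 1 < th -> e < m ^+ 2 / (2 * th ^+ 2) ->
  (1 - b0) * (p - x) < b0 * p * e -> 0 < p -> 2 * p < x * (x + 1).
Proof.
move=> x1 b0p xb e0 m0 mx xth th1 ee1 H p0.
set B := x * b0.
have th2 : 0 < 2 * th ^+ 2 by rewrite mulr_gt0 // exprn_gt0; lra.
have e2 : e * (2 * th ^+ 2) < m ^+ 2 by rewrite -ltr_pdivlMr.
have xt2 : x + 1 <= 2 * th ^+ 2.
  have : th <= th ^+ 2 by rewrite expr2 ler_peMr //; lra.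
  lra.
have m2 : m ^+ 2 <= (x - 1) ^+ 2 by rewrite ler_pXn2r // ?nnegrE; lra.
have k1 : (x + 1) * e <= m ^+ 2.
  have : (x + 1) * e <= 2 * th ^+ 2 * e by rewrite ler_pM2r.
  lra.
have k2 : (x + 1) * B * e <= (x + 1) * e.
  have : 0 <= (1 - B) * ((x + 1) * e) by rewrite mulr_ge0 // ?subr_ge0 // mulr_ge0 //; lra.
  lra.
have k3 : (x - 1) ^+ 2 <= (x - B) * (x - 1).
  have : 0 <= (1 - B) * (x - 1) by rewrite mulr_ge0 // subr_ge0 //; lra.
  have -> : (x - B) * (x - 1) = (x - 1) ^+ 2 + (1 - B) * (x - 1) by ring.
  lra.
have k4 : (x + 1) * b0 * e <= (1 - b0) * (x - 1).
  have x0 : 0 < x by lra.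
  rewrite -(ler_pM2l x0).
  have -> : x * ((x + 1) * b0 * e) = (x + 1) * B * e by rewrite /B; ring.
  have -> : x * ((1 - b0) * (x - 1)) = (x - B) * (x - 1) by rewrite /B; ring.
  lra.
have b01 : 0 < 1 - b0.
  have : b0 < 1.
    have : x * b0 < x * 1 by lra.
    by rewrite ltr_pM2l; lra.
  lra.
have k5 : (1 - b0) * ((p - x) * (x + 1)) < (1 - b0) * (p * (x - 1)).
  have : (1 - b0) * (p - x) * (x + 1) < b0 * p * e * (x + 1) by rewrite ltr_pM2r //; lra.
  have : b0 * p * e * (x + 1) <= p * ((1 - b0) * (x - 1)).
    have -> : b0 * p * e * (x + 1) = p * ((x + 1) * b0 * e) by ring.
    by rewrite ler_pM2l.
  have -> : (1 - b0) * ((p - x) * (x + 1)) = (1 - b0) * (p - x) * (x + 1) by ring.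
  have -> : (1 - b0) * (p * (x - 1)) = p * ((1 - b0) * (x - 1)) by ring.
  lra.
rewrite ltr_pM2l // in k5.
have -> : x * (x + 1) = x ^+ 2 + x by ring.
have : (p - x) * (x + 1) = p * x + p - x ^+ 2 - x by ring.
have : p * (x - 1) = p * x - p by ring.
lra.
Qed.
End Helpers.

Definition e1f (R : realType) (s th : R) : R :=
  (expR (ln th / (s + 2)) - 1) ^+ 2 / (2 * th ^+ 2).
Arguments e1f {R}.

Theorem corollary5 (R : realType) :
  exists C' : R -> R -> R,
  forall (theta r : R), 1 < theta ->
    theta^-1 < r -> r <= Num.sqrt theta ^-1 ->
    let s := s_param theta r in
    0 < C' s theta /\
    forall (d : measure_display) (T : measurableType d) (Pr : probability T R)
      (n : nat) (P : 'I_n -> T -> R) (Y : T -> R) (pstar eps : R),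
      (0 < n)%N ->
      (forall i, measurable_fun setT (P i)) ->
      (forall i w, 1 <= P i w <= theta) ->
      1 <= pstar <= theta ->
      {ae Pr, forall w, maxprice (fun i => P i w) = pstar} ->
      0 < eps -> eps <= Num.min (1 - pstar^-1) (theta / pstar - 1) ->
      measurable_fun setT Y ->
      (forall U : set R, measurable U ->
         Pr (Y @^-1` U) =
         (\int[@lebesgue_measure R]_(x in U)
            (uniform_pdf (pstar * (1 - eps)) (pstar * (1 + eps)) x)%:E)%E) ->
      (r * theta)^-1 * (1 - s / 2 * eps - C' s theta * eps ^+ 2) <=
        fine (\int[Pr]_w (A1 theta r [seq P i w | i <- enum 'I_n] (Y w))%:E)%E /
        fine (\int[Pr]_w (maxprice (fun i => P i w))%:E)%E.
Proof.
exists (fun s th => (e1f s th ^+ 2)^-1).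
move=> th r th1 rlo rhi s.
have th0 : 0 < th by clear -th1; lra.
have sqpos : 0 < Num.sqrt th by rewrite sqrtr_gt0.
have r0 : 0 < r by apply: lt_trans rlo; rewrite invr_gt0.
have r2 : r ^+ 2 * th <= 1.
  have hi : 0 <= th^-1 by rewrite invr_ge0 ltW.
  have h0 : 0 <= Num.sqrt th^-1 := sqrtr_ge0 _.
  have h : r ^+ 2 <= th^-1.
    rewrite -(sqr_sqrtr hi) ler_pXn2r // ?nnegrE ?ltW //.
  have : r ^+ 2 * th <= th^-1 * th by rewrite ler_pM2r.
  by rewrite mulVf ?gt_eqF.
have [_ r1 x1 a0p [b0p b0x aE abE phiE]] := @alg_facts R th r th1 rlo r2.
have [s1 [mx m1]] := @s_bound R th r th1 x1.
have sE : s = s_param th r := erefl.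
rewrite -sE in s1 mx m1.
set x := r * th in x1 a0p b0x aE abE phiE mx *.
set a0 := (x - 1) / (1 - r) in a0p aE abE phiE *.
set b0 := (1 - r ^+ 2 * th) / ((1 - r) * x) in b0p b0x aE abE phiE *.
set m := expR (ln th / (s + 2)) - 1.
have m0 : 0 < m by rewrite /m; clear -m1; lra.
have mx1 : m <= x - 1 by rewrite /m; clear -mx; lra.
have e1E : e1f s th = m ^+ 2 / (2 * th ^+ 2) by [].
have e10 : 0 < e1f s th by rewrite e1E divr_gt0 // ?mulr_gt0 // exprn_gt0.
have x0 : 0 < x by clear -x1; lra.
have xth : x <= th by rewrite /x ger_pMl //; clear -r1; lra.
have PhiE : forall z, Phi1 th r z = Num.max x (a0 + b0 * z).
  by move=> z; rewrite /Phi1 /phi_r phiE.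
have PhiM : forall y z, y <= z -> Phi1 th r y <= Phi1 th r z.
  move=> y z yz; rewrite !PhiE ge_max !le_max lexx /=.
  by apply/orP; right; rewrite lerD2l ler_wpM2l.
have Phige : forall z, x <= Phi1 th r z by move=> z; rewrite PhiE le_max lexx.
have Phiphi : forall z, a0 + b0 * z <= Phi1 th r z.
  by move=> z; rewrite PhiE le_max lexx orbT.
split; first by rewrite /= invr_gt0 exprn_gt0.
move=> d T Pr n P Y p e n0 mP Pb pb ae e0 ebnd mY HY.
move: ebnd; rewrite le_min => /andP[eb1 eb2].
move/andP: pb => [p1 pth].
have p0 : 0 < p by clear -p1; lra.
have pe1 : e * p <= p - 1.
  have : e * p <= (1 - p^-1) * p by rewrite ler_pM2r.
  have -> : (1 - p^-1) * p = p - 1 by field; rewrite gt_eqF.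
  by [].
have pe2 : e * p <= th - p.
  have : e * p <= (th / p - 1) * p by rewrite ler_pM2r.
  have -> : (th / p - 1) * p = th - p by field; rewrite gt_eqF.
  by [].
have pe0 : 0 < e * p by rewrite mulr_gt0.
set L := p * (1 - e) in HY *.
set U := p * (1 + e) in HY *.
have LE : L = p - e * p by rewrite /L; ring.
have UE : U = p + e * p by rewrite /U; ring.
have LU : L < U by clear -LE UE pe0; lra.
have Lp : L <= p by clear -LE UE pe0; lra.
have pU : p <= U by clear -LE UE pe0; lra.
have mI : forall i : interval R, measurable (Y @^-1` [set` i]).
  by move=> i; have := mY measurableT _ (measurable_itv i); rewrite setTI.
have PA : (Pr (Y @^-1` [set` `[L, p]]) = ((2 : R)^-1)%:E)%E.
  rewrite HY; last exact: measurable_itv.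
  rewrite unif_cc //.
  congr EFin; rewrite LE UE; field.
  by apply/eqP => h; clear -h pe0; lra.
have PB : (Pr (Y @^-1` [set` `]p, U]]) = ((2 : R)^-1)%:E)%E.
  rewrite HY; last exact: measurable_itv.
  rewrite unif_oc //.
  congr EFin; rewrite LE UE; field.
  by apply/eqP => h; clear -h pe0; lra.
have P1 : (Pr : {measure set T -> \bar R}) [set: T] = 1%E := probability_setT Pr.
set f := fun w => A1 th r [seq P i w | i <- enum 'I_n] (Y w).
have mPhi : measurable_fun setT (fun w => Phi1 th r (Y w)).
  have -> : (fun w => Phi1 th r (Y w)) = (fun w => Num.max x (a0 + b0 * Y w)).
    by apply/funext => w; rewrite PhiE.
  apply: (measurable_maxr (f := cst x)); first exact: measurable_cst.
  apply: (measurable_funD (f := cst a0)); first exact: measurable_cst.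
  apply: (measurable_funM (f := cst b0)) => //; exact: measurable_cst.
have mf : measurable_fun setT f := @meas_accept R d T 'I_n (enum 'I_n) _ P mPhi mP.
have f1 : forall w, 1 <= f w.
  move=> w; apply: accept_ge1 => v /mapP [i _ ->]; by case/andP: (Pb i w).
have f0 : forall w, 0 <= f w by move=> w; have := f1 w; lra.
have fth : forall w, f w <= th.
  move=> w; apply: accept_le => [v /mapP [i _ ->]|]; last by clear -th1; lra.
  by case/andP: (Pb i w).
have NUMle : (\int[Pr]_w (f w)%:E <= th%:E)%E.
  have -> : th%:E = (\int[Pr]_w (cst th%:E) w)%E by rewrite integral_cst // P1 mule1.
  apply: ge0_le_integral => //.
  - by move=> w _; rewrite lee_fin.
  - exact/measurable_EFinP.
  - by move=> w _; rewrite lee_fin.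
have DEN : (\int[Pr]_w (maxprice (fun i => P i w))%:E = p%:E)%E.
  rewrite (ae_eq_integral (cst p%:E)) //.
  - by rewrite integral_cst // P1 mule1.
  - apply/measurable_EFinP; exact: (@meas_bigmax R d T 'I_n (index_enum 'I_n) P mP).
  - by apply: filterS ae => w H _; rewrite H.
rewrite DEN /= ler_pdivlMr //.
set C := e1f s th ^- 2.
have C0 : 0 < C by rewrite /C invr_gt0 exprn_gt0.
set K := 1 - s / 2 * e - C * e ^+ 2.
have Ce0 : 0 <= C * e ^+ 2 by rewrite mulr_ge0 // ?sqr_ge0 // ltW.
have se0 : 0 <= s / 2 * e by rewrite !mulr_ge0 // ?invr_ge0 //; clear -s1 e0; lra.
have K1 : K <= 1 by rewrite /K; clear -Ce0 se0; lra.
set NUM := (\int[Pr]_w (A1 th r [seq P i w | i <- enum 'I_n] (Y w))%:E)%E.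
have NUMle' : (NUM <= th%:E)%E := NUMle.
have LB0 : 1 <= fine NUM.
  apply: (fun H => @fine_ge R _ _ _ H NUMle').
  have := @exp_step R d T Pr f setT setT 0 0 1 1 measurableT measurableT (lexx _) (lexx _) P1 P1 mf f0.
  rewrite !mul0r !addr0; apply.
  by apply: aeW => w; rewrite !mul0r !addr0.
have ix0 : 0 < x^-1 by rewrite invr_gt0.
have Kp1 : x^-1 * K * p <= x^-1 * p.
  by rewrite -mulrA ler_pM2l // ler_piMl // ltW.
have [K0|K0] := lerP K 0.
  apply: le_trans LB0.
  have : x^-1 * K * p <= 0.
    by rewrite -mulrA pmulr_rle0 // pmulr_lle0.
  move=> h; clear -h; lra.
have [px|px] := ltP p x.
  apply: le_trans LB0; apply: (le_trans Kp1).
  by rewrite mulrC ler_pdivrMr // mul1r ltW.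
have b01 : b0 < 1.
  apply: (le_lt_trans b0x); rewrite invf_lt1 //.
have Phip : Phi1 th r p <= p.
  rewrite PhiE ge_max px /=.
  rewrite aE.
  have : 0 <= (1 - b0) * (p - x) by rewrite mulr_ge0 // subr_ge0 // ltW.
  have -> : (1 - b0) * (p - x) = p - ((1 - b0) * x + b0 * p) by ring.
  move=> h; clear -h; lra.
have goodw : forall w, maxprice (fun i => P i w) = p -> Phi1 th r (Y w) <= p ->
    Phi1 th r (Y w) <= f w.
  by move=> w Hw HP; apply: (@payoff_ge R th r n (fun i => P i w) (Y w) p).
have [PU|PU] := leP (Phi1 th r U) p.
  have c1 : 0 <= Phi1 th r L - 1 by have := Phige L; move=> h; clear -h x1; lra.
  have c2 : 0 <= Phi1 th r p - 1 by have := Phige p; move=> h; clear -h x1; lra.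
  have LB1 : 1 + (Phi1 th r L - 1) * 2^-1 + (Phi1 th r p - 1) * 2^-1 <= fine NUM.
    apply: (fun H => @fine_ge R _ _ _ H NUMle').
    apply: (@exp_step R d T Pr f _ _ _ _ _ _ (mI _) (mI _) c1 c2 PA PB mf f0).
    apply: filterS ae => w Hw.
    rewrite !indicE.
    have [hA|hA] := boolP (w \in Y @^-1` `[L, p]);
      have [hB|hB] := boolP (w \in Y @^-1` `]p, U]) => /=.
    + move: hA hB; rewrite !in_setE /= !in_itv /= => /andP[h1 h2] /andP[h3 h4]; clear -h2 h3; lra.
    + rewrite mulr1 mulr0 addr0.
      move: hA; rewrite in_setE /= in_itv /= => /andP[h1 h2].
      have : Phi1 th r (Y w) <= f w by apply: goodw => //; apply: le_trans (PhiM _ _ h2) Phip.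
      have := PhiM _ _ h1; move=> ha hb; clear -ha hb; lra.
    + rewrite mulr0 mulr1 addr0.
      move: hB; rewrite in_setE /= in_itv /= => /andP[h3 h4].
      have : Phi1 th r (Y w) <= f w by apply: goodw => //; apply: le_trans (PhiM _ _ h4) PU.
      have := PhiM _ _ (ltW h3); move=> ha hb; clear -ha hb; lra.
    + by rewrite !mulr0 !addr0; exact: f1.
  apply: le_trans LB1.
  have := Phiphi L; have := Phiphi p.
  have H := @nf_ineq R x s e p a0 b0 th C x1 s1 e0 (ltW C0) p0 pth b0p b0x abE th0.
  rewrite -/K in H.
  have : b0 * L = b0 * p - b0 * p * e by rewrite LE; ring.
  move=> ha hb hc; clear -H ha hb hc; lra.
have pa : p < a0 + b0 * U.
  by move: PU; rewrite PhiE lt_max => /orP[h|//]; clear -h px; lra.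
have ee1 : e < e1f s th.
  have h : C * e ^+ 2 < 1 by rewrite /K in K0; clear -K0 se0; lra.
  have h2 : e ^+ 2 < e1f s th ^+ 2.
    by move: h; rewrite /C mulrC ltr_pdivrMr ?exprn_gt0 // mul1r.
  rewrite ltNge; apply/negP => h3.
  have : e1f s th * e1f s th <= e * e by apply: ler_pM => //; apply: ltW.
  rewrite -!expr2; move=> h4; clear -h2 h4; lra.
have two : 2 * p < x * (x + 1).
  apply: (@fail_ineq R x b0 p e m th x1 b0p _ e0 m0 mx1 xth th1 _ _ p0).
  - by rewrite -ler_pdivlMl // mulr1.
  - by rewrite -e1E.
  - have : b0 * U = b0 * p + b0 * p * e by rewrite UE; ring.
    have : (1 - b0) * (p - x) = p - ((1 - b0) * x + b0 * p) by ring.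
    rewrite -aE; move=> q1 q2; clear -q1 q2 pa; lra.
have x10 : 0 <= x - 1 by clear -x1; lra.
have LB2 : 1 + (x - 1) * 2^-1 + 0 * 1 <= fine NUM.
  apply: (fun H => @fine_ge R _ _ _ H NUMle').
  apply: (@exp_step R d T Pr f _ setT (x - 1) 0 _ 1 (mI _) measurableT x10 (lexx 0) PA P1 mf f0).
  apply: filterS ae => w Hw.
  rewrite !indicE mul0r addr0.
  have [hA|hA] := boolP (w \in Y @^-1` `[L, p]) => /=.
  + rewrite mulr1.
    move: hA; rewrite in_setE /= in_itv /= => /andP[h1 h2].
    have : Phi1 th r (Y w) <= f w by apply: goodw => //; apply: le_trans (PhiM _ _ h2) Phip.
    have := Phige (Y w); move=> ha hb; clear -ha hb; lra.
  + by rewrite !mulr0 !addr0; exact: f1.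
apply: le_trans LB2; apply: (le_trans Kp1).
rewrite mul0r addr0 ler_pdivrMl //.
have : x * (1 + (x - 1) * 2^-1) = (x * (x + 1)) / 2 by field.
move=> h; clear -h two; lra.
Qed.
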